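(* Let $\mathcal B(\mathcal S,\mathcal D)$ be a stabilizer basis with associated unitary $\Phi$, and let $\hat d_1,\hat d_2,\hat s_1,\hat s_2\in\{0,1\}^n$ and $\phi_1,\phi_2\in\mathbb C$ be such that $$\mathcal U=\phi_1\, d_{\hat d_1}s_{\hat s_1}+\phi_2\, d_{\hat d_2}s_{\hat s_2}$$ is unitary. Define $I_y=(\hat d_1+\hat d_2)\circ(\hat s_1+\hat s_2)$, $I_x=(\hat d_1+\hat d_2)+I_y$, $I_z=(\hat s_1+\hat s_2)+I_y$. Then there exist $\theta\in\mathbb R$ with $|\cos\theta|=|\phi_1|$ and a phase $\beta\in\mathbb R$ such that $$\Phi^{-1}\,\mathcal U\,\Phi = e^{i\beta}\big(\cos\theta\, I - i\sin\theta\, X_{I_x}Y_{I_y}Z_{I_z}\big)\,X_{\hat d_1}Z_{\hat s_1}.$$ That is, acting with $\mathcal U$ on $|\psi\rangle$ corresponds, on the coefficient vector $|\nu\rangle=\Phi^{-1}|\psi\rangle$, to the Pauli operator $X_{\hat d_1}Z_{\hat s_1}$ followed (up to a global phase) by a multi-qubit Pauli rotation $\cos\theta\,I-i\sin\theta\,X_{I_x}Y_{I_y}Z_{I_z}$.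
   Context: An $n$-qubit Pauli operator is a tensor product of $n$ matrices from $\{I,X,Y,Z\}$ times a phase in $\{\pm1,\pm i\}$. A stabilizer basis $\mathcal B(\mathcal S,\mathcal D)$ consists of Hermitian Pauli operators $s_1,\dots,s_n$ and $d_1,\dots,d_n$ such that: all $s_i$ pairwise commute; all $d_i$ pairwise commute; $d_i$ and $s_j$ commute for $i\neq j$; $d_i$ and $s_i$ anticommute; and the group generated by the $s_i$ does not contain $-I$. $|\psi_{\mathcal S}\rangle$ is the unit vector with $s_i|\psi_{\mathcal S}\rangle=|\psi_{\mathcal S}\rangle$. For $\hat a\in\{0,1\}^n$, $d_{\hat a}=d_1^{a_1}\cdots d_n^{a_n}$, $s_{\hat a}=s_1^{a_1}\cdots s_n^{a_n}$. $\Phi$ is the unitary with $\Phi|\hat a\rangle=d_{\hat a}|\psi_{\mathcal S}\rangle$. For a bit vector $\hat a$, $X_{\hat a}=\bigotimes_jX^{a_j}$, and similarly $Y_{\hat a}$, $Z_{\hat a}$. Bit-vector addition is mod 2, and $\circ$ denotes entrywise (Hadamard) product of bit vectors. *)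

(* Defs.v *)
From HB Require Import structures.
From mathcomp Require Import all_boot all_order all_algebra.
From mathcomp Require Import complex.
From mathcomp Require Import reals trigo.
Set Implicit Arguments. Unset Strict Implicit. Unset Printing Implicit Defensive.
Import Order.TTheory GRing.Theory Num.Theory.
Local Open Scope ring_scope.
Local Open Scope complex_scope.

Section Defs.
Variable R : realType.
Local Notation C := R[i].
Variable n : nat.
Local Notation N := (2 ^ n)%N.
Local Notation Mx := 'M[C]_N.

Inductive pauli1 := PI | PX | PY | PZ.

(* entry (row a, column b) of the single-qubit matrix; basis |0>=false, |1>=true *)
Definition pauli1_entry (p : pauli1) (a b : bool) : C :=
  match p with
  | PI => if a == b then 1 else 0
  | PX => if a == b then 0 else 1
  | PY => if a == b then 0 else (if a then 'i else - 'i)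
  | PZ => if a == b then (if a then -1 else 1) else 0
  end.

(* bit j of the computational-basis index k : qubit j of |k> *)
Definition bit (k : nat) (j : 'I_n) : bool := odd (k %/ 2 ^ j).

Definition bits_of (k : 'I_N) : 'I_n -> bool := fun j => bit k j.

(* tensor product P_0 (x) ... (x) P_{n-1}, written out entrywise (Kronecker product) *)
Definition pstring (p : 'I_n -> pauli1) : Mx :=
  \matrix_(a < N, b < N) \prod_(j < n) pauli1_entry (p j) (bit a j) (bit b j).

Definition ctrmx m k (M : 'M[C]_(m, k)) : 'M[C]_(k, m) := (map_mx (@conjc R) M)^T.

Definition hermitian (M : Mx) := ctrmx M = M.
Definition unitary (M : Mx) := ctrmx M *m M = 1%:M.

Definition is_pauli (M : Mx) :=
  exists (c : C) (p : 'I_n -> pauli1), c ^+ 4 = 1 /\ M = c *: pstring p.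

(* the group generated by the matrices g_i (closure of {1} under left
   multiplication by generators and their inverses) *)
Inductive in_gen (g : 'I_n -> Mx) : Mx -> Prop :=
  | gen_one : in_gen g 1%:M
  | gen_mul i M : in_gen g M -> in_gen g (g i *m M)
  | gen_mulV i M : in_gen g M -> in_gen g (invmx (g i) *m M).

Definition stabilizer_basis (s d : 'I_n -> Mx) :=
  (forall i, is_pauli (s i) /\ hermitian (s i)) /\
  (forall i, is_pauli (d i) /\ hermitian (d i)) /\
  (forall i j, s i *m s j = s j *m s i) /\
  (forall i j, d i *m d j = d j *m d i) /\
  (forall i j, i != j -> d i *m s j = s j *m d i) /\
  (forall i, d i *m s i = - (s i *m d i)) /\
  ~ in_gen s (- 1%:M).

(* g_a = g_1^{a_1} ... g_n^{a_n} (ordered product) *)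
Definition gprod (g : 'I_n -> Mx) (a : 'I_n -> bool) : Mx :=
  \big[mulmx/1%:M]_(j < n) (if a j then g j else 1%:M).

(* Phi |a> = d_a |psi> : column k of Phi is d_(bits_of k) psi *)
Definition Phi_of (d : 'I_n -> Mx) (psi : 'cV[C]_N) : Mx :=
  \matrix_(r < N, k < N) (gprod d (bits_of k) *m psi) r ord0.

Definition Xv (a : 'I_n -> bool) : Mx := pstring (fun j => if a j then PX else PI).
Definition Yv (a : 'I_n -> bool) : Mx := pstring (fun j => if a j then PY else PI).
Definition Zv (a : 'I_n -> bool) : Mx := pstring (fun j => if a j then PZ else PI).

Definition bxor (a b : 'I_n -> bool) : 'I_n -> bool := fun j => a j (+) b j.
Definition band (a b : 'I_n -> bool) : 'I_n -> bool := fun j => a j && b j.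

End Defs.

(* Main.v *)
Require Import Defs.
From HB Require Import structures.
From mathcomp Require Import all_boot all_order all_algebra.
From mathcomp Require Import complex.
From mathcomp Require Import reals trigo.
From mathcomp Require Import ring lra.
From Stdlib Require Import FunctionalExtensionality.
Set Implicit Arguments. Unset Strict Implicit. Unset Printing Implicit Defensive.
Import Order.TTheory GRing.Theory Num.Theory.
Local Open Scope ring_scope.
Local Open Scope complex_scope.

Lemma bit_nat_inj m a b : (a < 2 ^ m)%N -> (b < 2 ^ m)%N ->
  (forall j, (j < m)%N -> odd (a %/ 2 ^ j) = odd (b %/ 2 ^ j)) -> a = b.
Proof.
elim: m a b => [|m IH] a b.
  by rewrite expn0 !ltnS !leqn0 => /eqP -> /eqP ->.
move=> ha hb hj.
have h0 := hj 0%N isT; rewrite !expn0 !divn1 in h0.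
have e : a./2 = b./2.
  apply: IH.
  - by rewrite -divn2 ltn_divLR // -expnSr.
  - by rewrite -divn2 ltn_divLR // -expnSr.
  move=> j lj; have := hj j.+1 lj; by rewrite expnS !divnMA !divn2.
by rewrite -[a]odd_double_half -[b]odd_double_half h0 e.
Qed.

Section S.
Variable n : nat.

Lemma bits_inj (a b : 'I_(2 ^ n)) : (forall j : 'I_n, bit a j = bit b j) -> a = b.
Proof.
move=> h; apply: val_inj; apply: (@bit_nat_inj n); [exact: ltn_ord|exact: ltn_ord|] => j lj.
exact: (h (Ordinal lj)).
Qed.

Definition bf (k : 'I_(2 ^ n)) : {ffun 'I_n -> bool} := [ffun j => bit k j].

Lemma bf_inj : injective bf.
Proof. move=> a b /ffunP h; apply: bits_inj => j; have := h j; by rewrite !ffunE. Qed.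

Lemma bf_bij : bijective bf.
Proof.
apply: inj_card_bij; first exact: bf_inj.
by rewrite card_ffun card_bool card_ord !card_ord.
Qed.

Lemma bits_surj (v : 'I_n -> bool) : exists k : 'I_(2 ^ n), forall j, bit k j = v j.
Proof.
have [g hg1 hg2] := bf_bij.
exists (g [ffun j => v j]) => j.
have := hg2 [ffun j => v j]; move/ffunP/(_ j); by rewrite !ffunE.
Qed.

Variable R : realType.
Local Notation C := R[i].
Local Notation N := (2 ^ n)%N.

Lemma sum_prod (F : 'I_n -> bool -> C) :
  \sum_(k < N) \prod_(j < n) F j (bit k j) = \prod_(j < n) (F j false + F j true).
Proof.
transitivity (\prod_(j < n) \sum_(b : bool) F j b); last first.
  by apply: eq_bigr => j _; rewrite big_bool addrC.
rewrite bigA_distr_bigA /= (reindex bf); last exact: onW_bij bf_bij.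
by apply: eq_bigr => k _; apply: eq_bigr => j _; rewrite ffunE.
Qed.

Definition kmx (f : 'I_n -> bool -> bool -> C) : 'M[C]_N :=
  \matrix_(a < N, b < N) \prod_(j < n) f j (bit a j) (bit b j).

Definition kmul (f g : 'I_n -> bool -> bool -> C) j x y :=
  f j x false * g j false y + f j x true * g j true y.

Lemma kmxM f g : kmx f *m kmx g = kmx (kmul f g).
Proof.
apply/matrixP => a b; rewrite !mxE.
under eq_bigr => k _ do rewrite !mxE -big_split /=.
by rewrite (sum_prod (fun j z => f j (bit a j) z * g j z (bit b j))).
Qed.

Lemma kmx1 : kmx (fun _ x y => (x == y)%:R) = 1%:M.
Proof.
apply/matrixP => a b; rewrite !mxE.
have [->|ne] := eqVneq a b.
  by rewrite big1 // => j _; rewrite eqxx.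
have [j hj] : exists j : 'I_n, bit a j != bit b j.
  apply/existsP; apply: contraR ne => /existsPn h.
  by apply/eqP; apply: bits_inj => j; apply/eqP; exact: negbNE (h j).
by rewrite (bigD1 j) //= (negbTE hj) mul0r.
Qed.

Lemma kmxZ f g (c : 'I_n -> C) : (forall j x y, f j x y = c j * g j x y) ->
  kmx f = (\prod_(j < n) c j) *: kmx g.
Proof.
move=> h; apply/matrixP => a b; rewrite !mxE -big_split /=.
by apply: eq_bigr => j _; rewrite h.
Qed.

Lemma kmx_ext f g : (forall j x y, f j x y = g j x y) -> kmx f = kmx g.
Proof. by move=> h; apply/matrixP => a b; rewrite !mxE; apply: eq_bigr => j _; rewrite h. Qed.

Lemma ctrmx_kmx f : ctrmx (kmx f) = kmx (fun j x y => conjc (f j y x)).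
Proof.
apply/matrixP => a b; rewrite !mxE rmorph_prod.
by apply: eq_bigr => j _.
Qed.
End S.

Section Q.
Variable R : realType.
Local Notation C := R[i].

Lemma ii : 'i%R * 'i%R = -1 :> C.
Proof. by rewrite -expr2 sqrCi. Qed.
Lemma cj0 : conjc (0 : C) = 0. Proof. exact: conjc0. Qed.
Lemma cj1 : conjc (1 : C) = 1. Proof. exact: conjc1. Qed.
Lemma cjD (x y : C) : conjc (x + y) = conjc x + conjc y. Proof. exact: rmorphD. Qed.
Lemma cjM (x y : C) : conjc (x * y) = conjc x * conjc y. Proof. exact: rmorphM. Qed.
Lemma cjN (x : C) : conjc (- x) = - conjc x. Proof. exact: rmorphN. Qed.
Lemma cjB (x y : C) : conjc (x - y) = conjc x - conjc y. Proof. exact: rmorphB. Qed.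
Lemma cji : conjc ('i%R : C) = - 'i%R.
Proof. by rewrite -complexiE; apply/eqP; rewrite eq_complex /= oppr0 !eqxx. Qed.

Definition m2 (f g : bool -> bool -> C) x y := f x false * g false y + f x true * g true y.
Definition pe (p : pauli1) : bool -> bool -> C := @pauli1_entry R p.
Definition pX (a : bool) := pe (if a then PX else PI).
Definition pY (a : bool) := pe (if a then PY else PI).
Definition pZ (a : bool) := pe (if a then PZ else PI).

Ltac qsimp := rewrite /m2 /pX /pY /pZ /pe ?cjD ?cjM; simpl pauli1_entry; rewrite ?complexiE;
  rewrite ?(cj0, cj1, cjN, cji, subr0, oppr0, mul0r, mulr0, mul1r, mulr1, add0r, addr0, mulrN, mulNr, opprK, ii).

Definition cq a1 a2 b1 b2 : C :=
  (if (a1 (+) a2) && (b1 (+) b2) then - 'i%R else 1) * (if (b1 (+) b2) && a1 then -1 else 1).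

Lemma qubit1 a1 a2 b1 b2 x y :
  let dx := a1 (+) a2 in let z := b1 (+) b2 in let yy := dx && z in
  m2 (pX a2) (pZ b2) x y =
  cq a1 a2 b1 b2 * m2 (m2 (m2 (pX (dx (+) yy)) (pY yy)) (pZ (z (+) yy))) (m2 (pX a1) (pZ b1)) x y.
Proof.
rewrite /cq; case: a1; case: a2; case: b1; case: b2; case: x; case: y; qsimp => //.
Qed.

Definition qf dx z := m2 (m2 (pX (dx (+) (dx && z))) (pY (dx && z))) (pZ (z (+) (dx && z))).

Lemma qubit_herm dx z x y : conjc (qf dx z y x) = qf dx z x y.
Proof. rewrite /qf; case: dx; case: z; case: x; case: y; qsimp => //. Qed.

Lemma qubit_sq dx z x y : m2 (qf dx z) (qf dx z) x y = (x == y)%:R.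
Proof. rewrite /qf; case: dx; case: z; case: x; case: y; qsimp => //. Qed.

Lemma qubit_unit p x y : m2 (fun x y => conjc (pe p y x)) (pe p) x y = (x == y)%:R.
Proof. case: p; case: x; case: y; qsimp => //. Qed.

Lemma qubit_P1unit a b x y :
  m2 (fun x y => conjc (m2 (pX a) (pZ b) y x)) (m2 (pX a) (pZ b)) x y = (x == y)%:R.
Proof. case: a; case: b; case: x; case: y; qsimp => //. Qed.

Lemma qubit_P1entry a b x y :
  m2 (pX a) (pZ b) x y = (x == y (+) a)%:R * (if b && y then -1 else 1).
Proof. case: a; case: b; case: x; case: y; qsimp => //. Qed.

Lemma qubit_diag0 dx z : qf dx z false false = if dx then 0 else 1.
Proof. rewrite /qf; case: dx; case: z; qsimp => //. Qed.

Lemma qubit_diag1 z x : qf false z x x = if z && x then -1 else 1.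
Proof. rewrite /qf; case: z; case: x; qsimp => //. Qed.

Lemma cq_unit a1 a2 b1 b2 : cq a1 a2 b1 b2 * conjc (cq a1 a2 b1 b2) = 1.
Proof. rewrite /cq; case: a1; case: a2; case: b1; case: b2; qsimp => //. Qed.
End Q.

Section M.
Variable R : realType.
Local Notation C := R[i].
Variable n : nat.
Local Notation N := (2 ^ n)%N.
Local Notation Mx := 'M[C]_N.

Lemma XZ_kmx (a b : 'I_n -> bool) :
  @Xv R n a *m @Zv R n b = kmx (fun j => m2 (pX R (a j)) (pZ R (b j))).
Proof. exact: (kmxM (fun j => pX R (a j)) (fun j => pZ R (b j))). Qed.

Definition Qm (dx z : 'I_n -> bool) : Mx := kmx (fun j => qf R (dx j) (z j)).

Lemma Q_kmx d1 d2 s1 s2 :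
  let Iy := band (bxor d1 d2) (bxor s1 s2) in
  let Ix := bxor (bxor d1 d2) Iy in
  let Iz := bxor (bxor s1 s2) Iy in
  @Xv R n Ix *m @Yv R n Iy *m @Zv R n Iz = Qm (bxor d1 d2) (bxor s1 s2).
Proof.
move=> Iy Ix Iz.
rewrite (kmxM (fun j => pX R (Ix j)) (fun j => pY R (Iy j))).
by rewrite (kmxM _ (fun j => pZ R (Iz j))).
Qed.

Lemma F1 d1 d2 s1 s2 :
  @Xv R n d2 *m @Zv R n s2 =
  (\prod_(j < n) cq R (d1 j) (d2 j) (s1 j) (s2 j)) *:
    (Qm (bxor d1 d2) (bxor s1 s2) *m (@Xv R n d1 *m @Zv R n s1)).
Proof.
rewrite !XZ_kmx /Qm kmxM; apply: kmxZ => j x y.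
exact: qubit1.
Qed.

Lemma Q_herm dx z : ctrmx (Qm dx z) = Qm dx z.
Proof. rewrite /Qm ctrmx_kmx; apply: kmx_ext => j x y; exact: qubit_herm. Qed.

Lemma Q_sq dx z : Qm dx z *m Qm dx z = 1%:M.
Proof. rewrite /Qm kmxM -kmx1; apply: kmx_ext => j x y; exact: qubit_sq. Qed.

Lemma P_unit a b : ctrmx (@Xv R n a *m @Zv R n b) *m (@Xv R n a *m @Zv R n b) = 1%:M.
Proof. rewrite XZ_kmx ctrmx_kmx kmxM -kmx1; apply: kmx_ext => j x y; exact: qubit_P1unit. Qed.

Lemma pstring_unit p : ctrmx (@pstring R n p) *m @pstring R n p = 1%:M.
Proof.
rewrite -[@pstring R n p]/(kmx (fun j => pe R (p j))) ctrmx_kmx kmxM -kmx1.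
apply: kmx_ext => j x y; exact: qubit_unit.
Qed.

Lemma P_entry a b (k l : 'I_N) : (@Xv R n a *m @Zv R n b) k l =
  \prod_(j < n) ((bit k j == bit l j (+) a j)%:R * (if b j && bit l j then -1 else 1)).
Proof. rewrite XZ_kmx mxE; apply: eq_bigr => j _; exact: qubit_P1entry. Qed.

Lemma Q_diag0 dx z (k : 'I_N) : (forall j : 'I_n, bit k j = false) ->
  Qm dx z k k = \prod_(j < n) (if dx j then 0 else 1).
Proof. move=> h; rewrite mxE; apply: eq_bigr => j _; rewrite h; exact: qubit_diag0. Qed.

Lemma Q_diag1 dx z (k : 'I_N) : (forall j, dx j = false) ->
  Qm dx z k k = \prod_(j < n) (if z j && bit k j then -1 else 1).
Proof. move=> h; rewrite mxE; apply: eq_bigr => j _; rewrite h; exact: qubit_diag1. Qed.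

Lemma entry_lin (A B : C) (M : Mx) k : (A *: 1%:M + B *: M) k k = A + B * M k k.
Proof. by rewrite !mxE eqxx mulr1. Qed.

Lemma one_entry k : (1%:M : Mx) k k = 1.
Proof. by rewrite mxE eqxx. Qed.

Lemma Q_indep dx z (A B : C) : (exists j, dx j || z j) ->
  A *: 1%:M + B *: Qm dx z = 1%:M -> B = 0.
Proof.
move=> [j0 hj0] e.
have [k0 hk0] := bits_surj (fun _ : 'I_n => false).
have e0 := congr1 (fun M : Mx => M k0 k0) e; rewrite /= entry_lin one_entry in e0.
have [/existsP [j1 hj1]|hdx] := boolP [exists j, dx j].
  have q0 : Qm dx z k0 k0 = 0.
    by rewrite Q_diag0 // (bigD1 j1) //= hj1 mul0r.
  rewrite q0 mulr0 addr0 in e0.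
  rewrite e0 scale1r in e.
  have eB : B *: Qm dx z = 0.
    by apply: (addrI 1%:M); rewrite addr0.
  apply/eqP; apply: contraT => nB.
  have Q0 : Qm dx z = 0.
    by apply: (scalerI nB); rewrite eB scaler0.
  have := congr1 (fun M : Mx => M k0 k0) (Q_sq dx z).
  by rewrite Q0 mul0mx !mxE eqxx /= => /eqP; rewrite eq_sym oner_eq0.
have hdx' : forall j, dx j = false.
  by move=> j; apply/negbTE; move/existsPn: hdx; apply.
rewrite hdx' /= in hj0.
have [k1 hk1] := bits_surj (fun j : 'I_n => j == j0).
have e1 := congr1 (fun M : Mx => M k1 k1) e; rewrite /= entry_lin one_entry in e1.
rewrite Q_diag1 // big1 ?mulr1 in e0; last by move=> j _; rewrite hk0 andbF.
rewrite Q_diag1 // (bigD1 j0) //= big1 ?mulr1 in e1; last first.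
  by move=> j hj; rewrite hk1 (negbTE hj) andbF.
rewrite hj0 hk1 eqxx /= mulrN1 in e1.
have h2 : B *+ 2 = (A + B) - (A - B) by ring.
rewrite e0 e1 subrr in h2.
by move/eqP: h2; rewrite mulrn_eq0 /= => /eqP.
Qed.
End M.

Section CT.
Variable R : realType.
Local Notation C := R[i].

Lemma ctrmxM m p q (A : 'M[C]_(m, p)) (B : 'M[C]_(p, q)) :
  ctrmx (A *m B) = ctrmx B *m ctrmx A.
Proof. by rewrite /ctrmx map_mxM trmx_mul. Qed.

Lemma ctrmxD m p (A B : 'M[C]_(m, p)) : ctrmx (A + B) = ctrmx A + ctrmx B.
Proof. by rewrite /ctrmx map_mxD linearD. Qed.

Lemma ctrmxZ m p c (A : 'M[C]_(m, p)) : ctrmx (c *: A) = conjc c *: ctrmx A.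
Proof. by rewrite /ctrmx map_mxZ linearZ. Qed.

Lemma ctrmxK m p (A : 'M[C]_(m, p)) : ctrmx (ctrmx A) = A.
Proof. by apply/matrixP => i j; rewrite !mxE conjcK. Qed.

Lemma ctrmx1 m : ctrmx (1%:M : 'M[C]_m) = 1%:M.
Proof. by apply/matrixP => i j; rewrite !mxE eq_sym rmorph_nat. Qed.

Lemma conj_norm1 (c : C) : c ^+ 4 = 1 -> conjc c * c = 1.
Proof.
move=> h.
have n1 : `|c| = 1.
  apply/eqP; rewrite -(@pexpr_eq1 _ `|c| 4) ?normr_ge0 //.
  by rewrite -normrX h normr1.
by rewrite mulrC -sqr_normc n1 expr1n.
Qed.
End CT.

Section Stab.
Variable R : realType.
Local Notation C := R[i].
Variable n : nat.
Local Notation N := (2 ^ n)%N.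
Local Notation Mx := 'M[C]_N.

Lemma pauli_sq (M : Mx) : is_pauli M -> Defs.hermitian M -> M *m M = 1%:M.
Proof.
move=> [c [p [h4 ->]]]; rewrite /Defs.hermitian => herm.
rewrite -[X in X *m _]herm ctrmxZ -scalemxAl -scalemxAr scalerA conj_norm1 // scale1r.
exact: pstring_unit.
Qed.

Definition fB (g : 'I_n -> Mx) (a : 'I_n -> bool) (r : seq 'I_n) : Mx :=
  \big[mulmx/1%:M]_(j <- r) (if a j then g j else 1%:M).

Lemma gprodE g a : gprod g a = fB g a (index_enum 'I_n).
Proof. by []. Qed.

Lemma fB_comm (M : Mx) g a r : (forall j, M *m g j = g j *m M) ->
  M *m fB g a r = fB g a r *m M.
Proof.
move=> h; elim: r => [|j r IH]; first by rewrite /fB big_nil mulmx1 mul1mx.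
rewrite /fB big_cons -/(fB g a r) mulmxA.
case: (a j); last by rewrite mul1mx -mulmxA -IH mul1mx.
by rewrite h -!mulmxA IH.
Qed.

Lemma fB_xor g u a r : (forall i j, g i *m g j = g j *m g i) ->
  (forall j, g j *m g j = 1%:M) ->
  fB g u r *m fB g a r = fB g (bxor u a) r.
Proof.
move=> hc h2; elim: r => [|j r IH]; first by rewrite /fB !big_nil mulmx1.
rewrite /fB !big_cons -!/(fB _ _ r) -IH /bxor.
have cm : (if a j then g j else 1%:M) *m fB g u r = fB g u r *m (if a j then g j else 1%:M).
  case: (a j); last by rewrite mul1mx mulmx1.
  by apply: fB_comm => i; apply: hc.
rewrite -mulmxA (mulmxA (fB g u r)) -cm !mulmxA.
by case: (u j); case: (a j); rewrite /= ?mul1mx ?mulmx1 ?h2 ?mul1mx.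
Qed.

Lemma fB0 g r : fB g (fun _ => false) r = 1%:M.
Proof.
elim: r => [|j r IH]; first by rewrite /fB big_nil.
by rewrite /fB big_cons mul1mx; exact: IH.
Qed.

Lemma fB_ext g a a' r : (forall j, a j = a' j) -> fB g a r = fB g a' r.
Proof. by move=> h; rewrite /fB; apply: eq_bigr => j _; rewrite h. Qed.

Lemma fB_unit g a r : (forall j, ctrmx (g j) *m g j = 1%:M) ->
  ctrmx (fB g a r) *m fB g a r = 1%:M.
Proof.
move=> h; elim: r => [|j r IH]; first by rewrite /fB big_nil ctrmx1 mulmx1.
rewrite /fB big_cons -!/(fB _ _ r) ctrmxM.
case: (a j); last by rewrite ctrmx1 mulmx1 mul1mx.
by rewrite -mulmxA (mulmxA (ctrmx (g j))) h mul1mx.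
Qed.

Lemma fB_anti (h : Mx) g a r (sg : 'I_n -> C) :
  (forall j, h *m g j = sg j *: (g j *m h)) ->
  h *m fB g a r = (\prod_(j <- r) (if a j then sg j else 1)) *: (fB g a r *m h).
Proof.
move=> hh; elim: r => [|j r IH]; first by rewrite /fB !big_nil mulmx1 mul1mx scale1r.
rewrite /fB !big_cons -!/(fB _ _ r) mulmxA.
case: (a j).
  by rewrite hh -scalemxAl -mulmxA IH -scalemxAr scalerA mulmxA.
by rewrite mul1r mulmx1 mul1mx IH.
Qed.
End Stab.

Section Phi.
Variable R : realType.
Local Notation C := R[i].
Variable n : nat.
Local Notation N := (2 ^ n)%N.
Local Notation Mx := 'M[C]_N.
Variables (s d : 'I_n -> Mx) (psi : 'cV[C]_N).
Hypothesis Hsb : stabilizer_basis s d.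
Hypothesis Hpsi : ctrmx psi *m psi = 1%:M.
Hypothesis Hs : forall j, s j *m psi = psi.

Lemma dsq j : d j *m d j = 1%:M.
Proof. have [_ [hd _]] := Hsb; have [h1 h2] := hd j; exact: pauli_sq. Qed.
Lemma ssq j : s j *m s j = 1%:M.
Proof. have [hs _] := Hsb; have [h1 h2] := hs j; exact: pauli_sq. Qed.
Lemma dherm j : ctrmx (d j) = d j.
Proof. by have [_ [hd _]] := Hsb; have [h1 h2] := hd j. Qed.
Lemma sherm j : ctrmx (s j) = s j.
Proof. by have [hs _] := Hsb; have [h1 h2] := hs j. Qed.
Lemma dcomm i j : d i *m d j = d j *m d i.
Proof. by have [_ [_ [_ [h _]]]] := Hsb. Qed.

Lemma Dxor u a : gprod d u *m gprod d a = gprod d (bxor u a).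
Proof. rewrite !gprodE; apply: fB_xor; [exact: dcomm | exact: dsq]. Qed.

Lemma Dunit a : ctrmx (gprod d a) *m gprod d a = 1%:M.
Proof. rewrite gprodE; apply: fB_unit => j; by rewrite dherm dsq. Qed.

Lemma D0 a : (forall j, a j = false) -> gprod d a = 1%:M.
Proof. move=> h; rewrite gprodE -(fB0 d (index_enum 'I_n)); exact: fB_ext. Qed.

Lemma Dherm a : ctrmx (gprod d a) = gprod d a.
Proof.
have e : gprod d a *m gprod d a = 1%:M.
  by rewrite Dxor D0 // => j; rewrite /bxor addbb.
by rewrite -[LHS]mulmx1 -e mulmxA Dunit mul1mx.
Qed.

Lemma s_anti i a : s i *m gprod d a = (if a i then -1 else 1) *: (gprod d a *m s i).
Proof.
rewrite gprodE (@fB_anti R n _ _ a _ (fun j => if j == i then -1 else 1)); last first.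
  move=> j; have [->|ne] := eqVneq j i.
    have [_ [_ [_ [_ [_ [h _]]]]]] := Hsb.
    by rewrite h scaleN1r opprK.
  have [_ [_ [_ [_ [h _]]]]] := Hsb.
  by rewrite (h j i ne) scale1r.
congr (_ *: _).
rewrite -[\big[_/_]_(j <- index_enum _) _]/(\prod_(j < n) (if a j then (if j == i then -1 else 1) else 1)).
rewrite (bigD1 i) //= eqxx big1 ?mulr1 //.
by move=> j hj; rewrite (negbTE hj); case: (a j).
Qed.

Lemma S_on_D b a : gprod s b *m (gprod d a *m psi) =
  (\prod_(j < n) (if b j && a j then -1 else 1)) *: (gprod d a *m psi).
Proof.
rewrite gprodE.
rewrite -[\prod_(j < n) _]/(\big[*%R/1]_(j <- index_enum 'I_n) (if b j && a j then -1 else 1)).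
elim: (index_enum 'I_n) => [|j r IH]; first by rewrite /fB !big_nil mul1mx scale1r.
rewrite /fB !big_cons -!/(fB _ _ r) -mulmxA IH -scalemxAr.
case: (b j) => /=; last by rewrite mul1mx mul1r.
rewrite mulmxA s_anti -scalemxAl -mulmxA Hs scalerA; congr (_ *: _).
by case: (a j); rewrite ?mulrN1 ?mulr1 ?mulN1r ?mul1r.
Qed.


Lemma cols_ctr (M : Mx) (f : 'I_N -> 'cV[C]_N) a b :
  (forall r k, M r k = f k r ord0) -> (ctrmx M *m M) a b = (ctrmx (f a) *m f b) ord0 ord0.
Proof. by move=> h; rewrite !mxE; apply: eq_bigr => r _; rewrite !mxE !h. Qed.

Lemma cols_mul (G M : Mx) (f : 'I_N -> 'cV[C]_N) r l :
  (forall r k, M r k = f k r ord0) -> (G *m M) r l = (G *m f l) r ord0.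
Proof. by move=> h; rewrite !mxE; apply: eq_bigr => m _; rewrite h. Qed.

Lemma Phi_colE r k : Phi_of d psi r k = (gprod d (bits_of k) *m psi) r ord0.
Proof. by rewrite mxE. Qed.

Lemma Phi_unit : ctrmx (Phi_of d psi) *m Phi_of d psi = 1%:M.
Proof.
apply/matrixP => a b.
rewrite (@cols_ctr _ (fun k => gprod d (bits_of k) *m psi) a b Phi_colE).
rewrite ctrmxM Dherm -mulmxA (mulmxA (gprod d _)) Dxor.
have [<-|ne] := eqVneq a b.
  by rewrite D0 ?mul1mx ?Hpsi ?mxE ?eqxx // => j; rewrite /bxor addbb.
have [j hj] : exists j : 'I_n, bit a j != bit b j.
  apply/existsP; apply: contraR ne => /existsPn h.
  by apply/eqP; apply: bits_inj => j; apply/eqP; exact: negbNE (h j).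
set c := bxor _ _.
have cj : c j by rewrite /c /bxor /bits_of; move: hj; case: (bit a j); case: (bit b j).
set Y := ctrmx psi *m (gprod d c *m psi).
have e1 : gprod d c *m s j = - (s j *m gprod d c).
  by rewrite s_anti cj scaleN1r opprK.
have e2 : ctrmx psi *m s j = ctrmx psi by rewrite -{1}(sherm j) -ctrmxM Hs.
have h : gprod d c *m psi = - (s j *m (gprod d c *m psi)).
  by rewrite -{1}(Hs j) mulmxA e1 mulNmx mulmxA.
have eY : Y = - Y.
  by rewrite {1}/Y h mulmxN (mulmxA (ctrmx psi)) e2.
have Y0 : Y ord0 ord0 = 0.
  have : Y ord0 ord0 *+ 2 = 0.
    by rewrite mulr2n {1}eY mxE addNr.
  by move/eqP; rewrite mulrn_eq0 /= => /eqP.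
by rewrite Y0 mxE (negbTE ne).
Qed.

Lemma Phi_int a b :
  Phi_of d psi *m (@Xv R n a *m @Zv R n b) = (gprod d a *m gprod s b) *m Phi_of d psi.
Proof.
apply/matrixP => r l.
rewrite (@cols_mul _ _ (fun k => gprod d (bits_of k) *m psi) r l Phi_colE).
rewrite -(mulmxA (gprod d a)) S_on_D -scalemxAr (mulmxA (gprod d a)) Dxor.
have [k0 hk0] := bits_surj (fun j => bit l j (+) a j).
rewrite [LHS]mxE (bigD1 k0) //= big1 ?addr0; last first.
  move=> k hk; rewrite P_entry.
  have [j hj] : exists j : 'I_n, bit k j != bit k0 j.
    apply/existsP; apply: contraR hk => /existsPn h.
    by apply/eqP; apply: bits_inj => j; apply/eqP; exact: negbNE (h j).
  by rewrite (bigD1 j) //= -hk0 (negbTE hj) mul0r mul0r mulr0.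
rewrite P_entry Phi_colE [RHS]mxE mulrC; congr (_ * _).
  by apply: eq_bigr => j _; rewrite hk0 eqxx mul1r.
rewrite !gprodE (@fB_ext _ _ _ (bits_of k0) (bxor a (bits_of l))) // => j.
by rewrite /bits_of hk0 /bxor addbC.
Qed.
End Phi.

Section Trig.
Variable R : realType.

Lemma angle (x y : R) : x ^+ 2 + y ^+ 2 = 1 -> exists t : R, cos t = x /\ sin t = y.
Proof.
move=> h.
have hx : -1 <= x <= 1.
  have : x ^+ 2 <= 1 by rewrite -h lerDl sqr_ge0.
  by move=> hh; apply/andP; split; nra.
have sy : Num.sqrt (1 - x ^+ 2) = `|y|.
  by rewrite -h addrAC subrr add0r sqrtr_sqr.
have [y0|y0] := leP 0 y.
  exists (acos x); split; first exact: acosK.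
  by rewrite sin_acos // sy ger0_norm.
exists (- acos x); split; first by rewrite cosN acosK.
by rewrite sinN sin_acos // sy ltr0_norm ?opprK.
Qed.

Lemma polar (phi1 p : R[i]) :
  conjc phi1 * phi1 + conjc p * p = 1 ->
  conjc phi1 * p + conjc p * phi1 = 0 ->
  exists theta beta : R,
   (`|cos theta|)%:C = `|phi1| /\
   (cos beta +i* sin beta) * (cos theta)%:C = phi1 /\
   (cos beta +i* sin beta) * (Complex 0 1 * (sin theta)%:C) = - p.
Proof.
case: phi1 => a b; case: p => c e.
move=> /eqP; rewrite eq_complex /= => /andP [/eqP h1 _].
move=> /eqP; rewrite eq_complex /= => /andP [/eqP h2 _].
have hce : a * c + b * e = 0 by lra.
have hn : `|a +i* b| = (Num.sqrt (a ^+ 2 + b ^+ 2))%:C by rewrite normc_def.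
rewrite hn.
have [ab0|abn] := eqVneq (a ^+ 2 + b ^+ 2) 0.
  have a0 : a = 0 by nra.
  have b0 : b = 0 by nra.
  subst a b.
  have [t [ct st]] : exists t : R, cos t = 0 /\ sin t = 1 by apply: angle; rewrite expr0n expr1n add0r.
  have [u [cu su]] : exists u : R, cos u = - e /\ sin u = c by apply: angle; rewrite sqrrN; lra.
  exists t, u; rewrite ab0 sqrtr0 ct normr0; split => //; split.
    by apply/eqP; rewrite eq_complex /= !mulr0 subrr addr0 eqxx.
  by apply/eqP; rewrite eq_complex /= st cu su; apply/andP; split; apply/eqP; ring.
set r := Num.sqrt (a ^+ 2 + b ^+ 2).
have r2 : r ^+ 2 = a ^+ 2 + b ^+ 2 by rewrite sqr_sqrtr // addr_ge0 ?sqr_ge0.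
have rpos : 0 < r by rewrite sqrtr_gt0 lt_def abn /= addr_ge0 ?sqr_ge0.
have rn0 : r != 0 by rewrite gt_eqF.
have [u [cu su]] : exists u : R, cos u = a / r /\ sin u = b / r.
  by apply: angle; rewrite !expr_div_n -mulrDl -r2 divff // expf_neq0.
have ea : a = r * cos u by rewrite cu mulrC divfK.
have eb : b = r * sin u by rewrite su mulrC divfK.
have cs := cos2Dsin2 u.
have hce' : cos u * c + sin u * e = 0.
  apply: (mulfI rn0); rewrite mulr0 -hce ea eb; ring.
have [t [ct st]] : exists t : R, cos t = r /\ sin t = sin u * c - cos u * e.
  apply: angle.
  have : (sin u * c - cos u * e) ^+ 2 = (c ^+ 2 + e ^+ 2) * (cos u ^+ 2 + sin u ^+ 2) - (cos u * c + sin u * e) ^+ 2 by ring.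
  rewrite cs hce' expr0n subr0 mulr1 => ->; rewrite r2; lra.
exists t, u; rewrite ct ger0_norm ?ltW //; split => //; split.
  by apply/eqP; rewrite eq_complex /= ea eb; apply/andP; split; apply/eqP; ring.
apply/eqP; rewrite eq_complex /= st; apply/andP; split; apply/eqP.
  have E : c * (1 - (cos u ^+ 2 + sin u ^+ 2)) - c + cos u * (cos u * c + sin u * e) = - c.
    by rewrite cs hce' subrr !mulr0 add0r addr0.
  rewrite -E; ring.
have E : e * (1 - (cos u ^+ 2 + sin u ^+ 2)) - e + sin u * (cos u * c + sin u * e) = - e.
  by rewrite cs hce' subrr !mulr0 add0r addr0.
rewrite -E; ring.
Qed.
End Trig.

Lemma lin2 (R : realType) m (Q : 'M[R[i]]_m) (al be ga de : R[i]) : Q *m Q = 1%:M ->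
  (al *: 1%:M + be *: Q) *m (ga *: 1%:M + de *: Q) =
  (al * ga + be * de) *: 1%:M + (al * de + be * ga) *: Q.
Proof.
move=> hQ.
rewrite mulmxDl !mulmxDr -!scalemxAl -!scalemxAr !mul1mx !mulmx1 hQ !scalerA.
rewrite !scalerDl; rewrite -!addrA; congr (_ + _).
by rewrite addrA addrC.
Qed.

Theorem lemma2 (R : realType) (n : nat)
    (s d : 'I_n -> 'M[R[i]]_(2 ^ n)) (psi : 'cV[R[i]]_(2 ^ n))
    (d1 d2 s1 s2 : 'I_n -> bool) (phi1 phi2 : R[i]) :
  stabilizer_basis s d ->
  ctrmx psi *m psi = 1%:M ->
  (forall j, s j *m psi = psi) ->
  (d1 <> d2 \/ s1 <> s2) ->
  let U := phi1 *: (gprod d d1 *m gprod s s1) + phi2 *: (gprod d d2 *m gprod s s2) in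
  unitary U ->
  let Phi := Phi_of d psi in
  let Iy := band (bxor d1 d2) (bxor s1 s2) in
  let Ix := bxor (bxor d1 d2) Iy in
  let Iz := bxor (bxor s1 s2) Iy in
  exists theta beta : R,
    (`|cos theta|)%:C = `|phi1| /\
    invmx Phi *m U *m Phi =
      (cos beta +i* sin beta) *:
        (((cos theta)%:C *: 1%:M
          - (Complex 0 1 * (sin theta)%:C) *: (@Xv R n Ix *m @Yv R n Iy *m @Zv R n Iz))
         *m (@Xv R n d1 *m @Zv R n s1)).
Proof.
move=> Hsb Hpsi Hs Hne U HU Phi Iy Ix Iz.
rewrite (@Q_kmx R n d1 d2 s1 s2).
set Q := Qm R (bxor d1 d2) (bxor s1 s2).
set P1 := @Xv R n d1 *m @Zv R n s1.
set c := \prod_(j < n) cq R (d1 j) (d2 j) (s1 j) (s2 j).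
have hP2 := F1 R d1 d2 s1 s2.
have PhiU : ctrmx Phi *m Phi = 1%:M by exact: (Phi_unit Hsb Hpsi Hs).
have [_ Phiu] := mulmx1_unit PhiU.
have hinv : invmx Phi = ctrmx Phi.
  by rewrite -[invmx Phi]mul1mx -PhiU -mulmxA mulmxV ?mulmx1.
have hG a b : invmx Phi *m (gprod d a *m gprod s b) *m Phi = @Xv R n a *m @Zv R n b.
  by rewrite -mulmxA -(Phi_int Hsb Hs) mulKmx.
have Vdef : invmx Phi *m U *m Phi = phi1 *: P1 + (phi2 * c) *: (Q *m P1).
  rewrite /U mulmxDr mulmxDl -!scalemxAr -!scalemxAl !hG hP2 scalerA //.
set W := phi1 *: 1%:M + (phi2 * c) *: Q.
have VW : invmx Phi *m U *m Phi = W *m P1.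
  by rewrite Vdef /W mulmxDl -!scalemxAl mul1mx.
have Vunit : ctrmx (W *m P1) *m (W *m P1) = 1%:M.
  rewrite -VW hinv !ctrmxM ctrmxK.
  have PP : Phi *m ctrmx Phi = 1%:M by apply: mulmx1C.
  rewrite -!mulmxA (mulmxA Phi) PP mul1mx (mulmxA (ctrmx U)) HU mul1mx.
  exact: PhiU.
have P1u : ctrmx P1 *m P1 = 1%:M := P_unit R d1 s1.
have P1u' : P1 *m ctrmx P1 = 1%:M by apply: mulmx1C.
have WW : ctrmx W *m W = 1%:M.
  move: Vunit; rewrite ctrmxM -mulmxA (mulmxA (ctrmx W)) => h.
  have := congr1 (fun M => P1 *m M *m ctrmx P1) h.
  by rewrite /= mulmxA P1u' mul1mx -mulmxA P1u' mulmx1 mulmx1 P1u'.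
have Wc : ctrmx W = conjc phi1 *: 1%:M + conjc (phi2 * c) *: Q.
  by rewrite /W ctrmxD !ctrmxZ ctrmx1 Q_herm.
rewrite Wc lin2 in WW; last exact: Q_sq.
have hex : exists j, bxor d1 d2 j || bxor s1 s2 j.
  apply/existsP; apply: contraT => /existsPn h.
  have e1 : forall j, d1 j = d2 j /\ s1 j = s2 j.
    by move=> j; have := h j; rewrite negb_or /bxor; case: (d1 j); case: (d2 j); case: (s1 j); case: (s2 j).
  case: Hne => ne; exfalso; apply: ne; apply: functional_extensionality => j; by case: (e1 j).
have B0 := Q_indep hex WW.
rewrite B0 scale0r addr0 in WW.
have [k0 _] := bits_surj (fun _ : 'I_n => false).
have A1 : conjc phi1 * phi1 + conjc (phi2 * c) * (phi2 * c) = 1.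
  by have := congr1 (fun M : 'M[R[i]]_(2 ^ n) => M k0 k0) WW; rewrite /= !mxE eqxx mulr1.
have [th [be [h1 [h2 h3]]]] := polar A1 B0.
exists th, be; split => //.
rewrite VW /W mulmxBl -!scalemxAl mul1mx mulmxDl -!scalemxAl mul1mx.
rewrite scalerBr !scalerA h2 h3 scaleNr opprK.
done.
Qed.
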